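(* Let $R$ be a unital associative ring, $n\ge1$, $D_1,D_2$ invertible diagonal $n\times n$ matrices over $R$, and $A,B\in\widehat M_n(R)$. Then $B=D_1^{-1}AD_2$ holds if and only if there is $x\in R^*$ such that $D_1=D_2=xI$ (with $I$ the $n\times n$ identity matrix) and $B=x^{-1}Ax$ (entrywise left multiplication by $x^{-1}$ and right multiplication by $x$). In particular, $A\sim B$ if and only if there is $x\in R^*$ with $B=x^{-1}Ax$.
   Context: $R^*$ denotes the units of $R$. $\widehat M_n(R)=\{A=\{a_{j,k}\}\in M_n(R): a_{1,k}=a_{k,1}=1\text{ for }1\le k\le n\}$. $A\sim B$ means $B=D_1^{-1}AD_2$ for some invertible diagonal matrices $D_1,D_2$. *)

(* Defs.v *)
From HB Require Import structures.
From mathcomp Require Import all_boot all_order all_algebra.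
Set Implicit Arguments. Unset Strict Implicit. Unset Printing Implicit Defensive.
Import GRing.Theory.
Local Open Scope ring_scope.

(* Matrices are n.+1 x n.+1 (so n >= 1 is built in); index ord0 is the paper's index 1. *)

Definition hatM (R : unitRingType) (n : nat) (A : 'M[R]_n.+1) : Prop :=
  forall k : 'I_n.+1, A ord0 k = 1 /\ A k ord0 = 1.

Definition inv_diag_with (R : unitRingType) (n : nat) (D E : 'M[R]_n.+1) : Prop :=
  is_diag_mx D /\ D *m E = 1%:M /\ E *m D = 1%:M.

Definition inv_diag (R : unitRingType) (n : nat) (D : 'M[R]_n.+1) : Prop :=
  exists E, inv_diag_with D E.

Definition mx_sim (R : unitRingType) (n : nat) (A B : 'M[R]_n.+1) : Prop :=
  exists D1 E1 D2 : 'M[R]_n.+1,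
    inv_diag_with D1 E1 /\ inv_diag D2 /\ B = E1 *m A *m D2.

(* Main.v *)
Require Import Defs.
From mathcomp Require Import all_boot all_order all_algebra.
Import GRing.Theory.
Local Open Scope ring_scope.

Lemma inv_diag_facts (R : unitRingType) (n : nat) (D E : 'M[R]_n.+1) :
  inv_diag_with D E -> exists d : 'rV[R]_n.+1, D = diag_mx d /\
    E = diag_mx (\row_j (d 0 j)^-1) /\ forall j, d 0 j \is a GRing.unit.
Proof.
case=> /diag_mxP [d ->] [DE ED].
have h1 i j : d 0 i * E i j = (i == j)%:R.
  by move/matrixP: DE => /(_ i j); rewrite mul_diag_mx !mxE.
have h2 i j : E i j * d 0 j = (i == j)%:R.
  by move/matrixP: ED => /(_ i j); rewrite mul_mx_diag !mxE.
have u j : d 0 j \is a GRing.unit.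
  by apply/unitrP; exists (E j j); rewrite h1 h2 eqxx.
exists d; split=> //; split=> //.
apply/matrixP=> i j; rewrite !mxE.
case: eqVneq => [->|neq].
- have := h1 j j; rewrite eqxx => /(congr1 (fun y => (d 0 j)^-1 * y)).
  by rewrite mulKr // mulr1.
- have := h2 i j; rewrite (negbTE neq) => H.
  by rewrite -[E i j]mulr1 -(divrr (u j)) mulrA H mul0r.
Qed.

Lemma part1 (R : unitRingType) (n : nat) (D1 E1 D2 A B : 'M[R]_n.+1) :
     inv_diag_with D1 E1 -> inv_diag D2 -> hatM A -> hatM B ->
     (B = E1 *m A *m D2 <->
      exists x : R, x \is a GRing.unit /\ D1 = x%:M /\ D2 = x%:M /\
        B = \matrix_(i, j) (x^-1 * A i j * x)).
Proof.
move=> /inv_diag_facts [d [-> [-> ud]]] [E2] /inv_diag_facts [f [-> [_ uf]]] hA hB.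
split.
- move=> eB.
  have Bij i j : B i j = (d 0 i)^-1 * A i j * f 0 j.
    by rewrite eB mul_mx_diag mul_diag_mx !mxE.
  set x := d 0 ord0.
  have fj j : f 0 j = x.
    have := Bij ord0 j; rewrite (proj1 (hB j)) (proj1 (hA j)) mulr1 => H.
    by rewrite -[f 0 j]mul1r -(divrr (ud ord0)) -mulrA -H mulr1.
  have di i : d 0 i = x.
    have := Bij i ord0; rewrite (proj2 (hB i)) (proj2 (hA i)) mulr1 fj => H.
    by rewrite -[d 0 i]mulr1 H mulrA divrr ?mul1r.
  exists x; split; first exact: ud.
  split; last split.
  + by rewrite -diag_const_mx; congr diag_mx; apply/rowP=> j; rewrite !mxE -(ord1 0) di.
  + by rewrite -diag_const_mx; congr diag_mx; apply/rowP=> j; rewrite !mxE -(ord1 0) fj.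
  + by apply/matrixP=> i j; rewrite Bij mxE di fj.
- case=> x [ux [ed [ef ->]]].
  have di i : d 0 i = x by move/matrixP: ed => /(_ i i); rewrite !mxE eqxx mulr1n.
  have fj j : f 0 j = x by move/matrixP: ef => /(_ j j); rewrite !mxE eqxx mulr1n.
  by apply/matrixP=> i j; rewrite mul_mx_diag mul_diag_mx !mxE di fj.
Qed.

Theorem lemma3 (R : unitRingType) (n : nat) :
  (forall (D1 E1 D2 A B : 'M[R]_n.+1),
     inv_diag_with D1 E1 -> inv_diag D2 -> hatM A -> hatM B ->
     (B = E1 *m A *m D2 <->
      exists x : R, x \is a GRing.unit /\ D1 = x%:M /\ D2 = x%:M /\
        B = \matrix_(i, j) (x^-1 * A i j * x)))
  /\
  (forall A B : 'M[R]_n.+1, hatM A -> hatM B ->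
     (mx_sim A B <->
      exists x : R, x \is a GRing.unit /\ B = \matrix_(i, j) (x^-1 * A i j * x))).
Proof.
split; first exact: part1.
move=> A B hA hB; split.
- case=> D1 [E1 [D2 [h1 [h2 eB]]]].
  have [x [ux [_ [_ ->]]]] := (proj1 (@part1 _ _ _ _ _ _ _ h1 h2 hA hB) eB).
  by exists x.
- case=> x [ux eB].
  have hd : inv_diag_with (x%:M : 'M[R]_n.+1) (x^-1%:M).
    split; first exact: scalar_mx_is_diag.
    by rewrite -!scalar_mxM mulrV ?mulVr.
  exists x%:M, x^-1%:M, x%:M; split=> //; split; first by exists x^-1%:M.
  have h2 : inv_diag (x%:M : 'M[R]_n.+1) by exists x^-1%:M.
  apply: (proj2 (@part1 _ _ _ _ _ _ _ hd h2 hA hB)).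
  by exists x.
Qed.
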